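(* Let $K\ge 2$, $a\ge 1$, $b\ge 1$ be integers and $M\ge 0$. For the $(K,a,b)$ coded caching problem for location-based content with cache size $M$: if $K$ is even then $R^\star_{\rm u}\le 2R^\star$, and if $K$ is odd then $R^\star_{\rm u}\le 3R^\star$.
   Context: For integers $x\le y$, $[x:y]=\{x,x+1,\dots,y\}$ and $[n]=[1:n]$. For integers $c$ and $m\ge1$, $\langle c\rangle_m$ denotes the unique element of $\{1,\dots,m\}$ congruent to $c$ modulo $m$. The $(K,a,b)$ coded caching problem for location-based content: a server has $N=K(a+b)$ files $W_1,\dots,W_N$, each consisting of $B$ independent uniformly distributed bits (any subpacketization of files is allowed). There are $K$ cache nodes, each storing $MB$ bits, and $K$ users, user $k$ having free access to cache node $k$ only. For $k\in[K]$ define $\mathcal D_{k,1}=[(k-1)(a+b)+1:ka+(k-1)b]$, $\mathcal D_{k,2}=[ka+(k-1)b+1:k(a+b)]$, $\mathcal D_{k,3}=\mathcal D_{\langle k+1\rangle_K,1}$, and $\mathcal D_k=\mathcal D_{k,1}\cup\mathcal D_{k,2}\cup\mathcal D_{k,3}$. A scheme consists of: placement functions $Z_k=\phi_k(W_1,\dots,W_N)\in\{0,1\}^{MB}$ for $k\in[K]$, chosen without knowledge of demands; for every demand vector $\mathbf d=(d_1,\dots,d_K)\in\mathcal D_1\times\cdots\times\mathcal D_K$, a transmitted message $X=\psi(\mathbf d,W_1,\dots,W_N)\in\{0,1\}^{RB}$ broadcast to all users; and decoding functions such that, for every such $\mathbf d$ and every $k$, user $k$ recovers $W_{d_k}$ exactly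 from $(\mathbf d,Z_k,X)$. The number $R$ is the (worst-case) load of the scheme. The optimal load $R^\star$ is the infimum of $R$ over all schemes (and all $B$). The placement is uncoded if each $Z_k$ consists of a subset of the bits of the files copied directly; $R^\star_{\rm u}$ is the infimum of loads over schemes with uncoded placement. *)

(* Defs.v *)
From HB Require Import structures.
From mathcomp Require Import all_boot all_order all_algebra.
From mathcomp Require Import classical_sets reals.
Set Implicit Arguments. Unset Strict Implicit. Unset Printing Implicit Defensive.
Import Order.TTheory GRing.Theory Num.Theory.
Local Open Scope classical_set_scope.

(* Paper indices are 1-based: user/cache k (paper) is ordinal k-1 here,
   file j (paper, j in [1:N]) is ordinal j-1 here. *)

Definition inD1 (a b k j : nat) : bool :=
  ((k.-1 * (a + b)).+1 <= j) && (j <= k * a + k.-1 * b).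
Definition inD2 (a b k j : nat) : bool :=
  ((k * a + k.-1 * b).+1 <= j) && (j <= k * (a + b)).
Definition cycK (K c : nat) : nat := (c.-1 %% K).+1.
Definition inD (K a b k j : nat) : bool :=
  [|| inD1 a b k j, inD2 a b k j | inD1 a b (cycK K k.+1) j].

Definition bits (n : nat) := {ffun 'I_n -> bool}.
Definition file (B : nat) := bits B.
Definition library (N B : nat) := {ffun 'I_N -> file B}.
Definition demand (K N : nat) := {ffun 'I_K -> 'I_N}.

Definition valid_demand (K a b : nat) (d : demand K (K * (a + b))) : Prop :=
  forall k : 'I_K, inD K a b k.+1 (d k).+1.

Definition uncoded_placement (K N B c : nat)
  (phi : 'I_K -> library N B -> bits c) : Prop :=
  exists pos : 'I_K -> 'I_c -> 'I_N * 'I_B,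
    forall k, injective (pos k) /\
      forall (W : library N B) (i : 'I_c), phi k W i = W (pos k i).1 (pos k i).2.

(* Existence of a (zero-error) scheme with file size B bits, cache size c bits
   per node and message size r bits; if unc, placement must be uncoded. *)
Definition scheme_exists (unc : bool) (K a b B c r : nat) : Prop :=
  exists (phi : 'I_K -> library (K * (a + b)) B -> bits c)
         (psi : demand K (K * (a + b)) -> library (K * (a + b)) B -> bits r)
         (mu : demand K (K * (a + b)) -> 'I_K -> bits c -> bits r -> file B),
    (unc -> @uncoded_placement K (K * (a + b)) B c phi) /\
    forall d, @valid_demand K a b d ->
      forall (W : library (K * (a + b)) B) (k : 'I_K),
        mu d k (phi k W) (psi d W) = W (d k).

Local Open Scope ring_scope.

Definition loads (R : realType) (unc : bool) (K a b : nat) (M : R) : set R :=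
  [set x | exists B c r : nat, (0 < B)%N /\ (c%:R <= M * B%:R) /\
       x = r%:R / B%:R /\ scheme_exists unc K a b B c r].

Definition Ropt (R : realType) K a b (M : R) : R := inf (loads false K a b M).
Definition Ropt_u (R : realType) K a b (M : R) : R := inf (loads true K a b M).

(* Main.v *)
Require Import Defs.
From HB Require Import structures.
From mathcomp Require Import all_boot all_order all_algebra.
From mathcomp Require Import classical_sets reals.
From mathcomp Require Import zify ring lra.
Import Order.TTheory GRing.Theory Num.Theory.

Lemma lt_mul_blk m k n y : m < k -> y < n -> m*n + y < k*n.
Proof.
move=> mk yn; have: m.+1 * n <= k * n by rewrite leq_mul2r mk orbT.
rewrite mulSn; lia.
Qed.

Lemma block_inj {n x y x' y'} : y < n -> y' < n -> x*n + y = x'*n + y' -> x = x' /\ y = y'.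
Proof.
move=> yn y'n E.
have n0 : 0 < n by lia.
have := congr1 (divn^~ n) E; rewrite !divnMDl // !divn_small // !addn0 => ex.
by split=> //; move: E; rewrite ex => /addnI.
Qed.

Definition fkn (K a b k p : nat) : nat :=
  if p < a+b then k*(a+b)+p else ((k.+1) %% K)*(a+b) + (p - (a+b)).

Definition pinv (K a b k f : nat) : nat :=
  if (k*(a+b) <= f) && (f < k.+1*(a+b)) then f - k*(a+b)
  else f - ((k.+1) %% K)*(a+b) + (a+b).

Lemma fkn_lt K a b k p : k < K -> p < 2*a+b -> fkn K a b k p < K*(a+b).
Proof.
move=> kK pq; rewrite /fkn; case: ifP => h.
  by apply: lt_mul_blk.
apply: lt_mul_blk; first by rewrite ltn_pmod //; lia.
lia.
Qed.

Lemma fkn_inj K a b k p p' : 2 <= K -> k < K -> p < 2*a+b -> p' < 2*a+b ->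
  fkn K a b k p = fkn K a b k p' -> p = p'.
Proof.
move=> K2 kK pq p'q; rewrite /fkn.
have mk : (k.+1 %% K) != k.
  case: (ltnP k.+1 K) => h; first by rewrite modn_small //; lia.
  have ->: k.+1 = K by lia.
  rewrite modnn; lia.
case: ifP => h1; case: ifP => h2.
- lia.
- move=> E; have h3 : p' - (a+b) < a+b by lia.
  have [ek _] := block_inj h1 h3 E; by move: mk; rewrite -ek eqxx.
- move=> E; have h3 : p - (a+b) < a+b by lia.
  have [ek _] := block_inj h3 h2 E; by rewrite ek eqxx in mk.
- lia.
Qed.

Lemma pinv_ok K a b (k : 'I_K) f : 2 <= K -> inD K a b k.+1 f.+1 ->
  pinv K a b k f < 2*a+b /\ fkn K a b k (pinv K a b k f) = f.
Proof.
move=> K2; rewrite /inD /inD1 /inD2 /cycK /=.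
have mK : k.+1 %% K < K by rewrite ltn_pmod //; lia.
move: mK; set m := k.+1 %% K => mK.
rewrite /pinv /fkn.
case/or3P => /andP [h1 h2]; case: ifP => /andP.
- move=> [h3 h4]; split; [lia|]. rewrite ifT; lia.
- move=> h; exfalso; apply: h; split; lia.
- move=> [h3 h4]; split; [lia|]. rewrite ifT; lia.
- move=> h; exfalso; apply: h; split; lia.
- move=> [h3 h4]; split; [lia|]. rewrite ifT; lia.
- move=> h; split; [lia|]. rewrite ifF; lia.
Qed.


Lemma posf_lt K a b t (k : 'I_K) (x : 'I_((2*a+b)*t)) : fkn K a b k (x %/ t) < K*(a+b).
Proof.
have t0 : 0 < t by case: t x => [|t] [x]; rewrite ?muln0.
apply: fkn_lt => //; by rewrite ltn_divLR.
Qed.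

Lemma bit_lt a b t B (htB : t <= B) (x : 'I_((2*a+b)*t)) : x %% t < B.
Proof.
have t0 : 0 < t by case: t htB x => [|t] ? [x]; rewrite ?muln0.
apply: leq_trans htB; by rewrite ltn_pmod.
Qed.

Definition posf K a b t B (htB : t <= B) (k : 'I_K) (x : 'I_((2*a+b)*t)) :
  'I_(K*(a+b)) * 'I_B := (Ordinal (@posf_lt K a b t k x), Ordinal (@bit_lt a b t B htB x)).

Lemma posf_inj K a b t B (htB : t <= B) (K2 : 2 <= K) k : injective (@posf K a b t B htB k).
Proof.
move=> x y [] /= E1 E2.
have t0 : 0 < t by case: t htB x {E1 E2} y => [|t] ? [x]; rewrite ?muln0.
have xq : x %/ t < 2*a+b by rewrite ltn_divLR.
have yq : y %/ t < 2*a+b by rewrite ltn_divLR.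
have E := @fkn_inj K a b k _ _ K2 (ltn_ord k) xq yq E1.
by apply: val_inj; rewrite /= (divn_eq x t) (divn_eq y t) E E2.
Qed.

Definition phiU K a b t B (htB : t <= B) (k : 'I_K) (W : library (K*(a+b)) B) :
  bits ((2*a+b)*t) := [ffun x => W (@posf K a b t B htB k x).1 (@posf K a b t B htB k x).2].

Definition psiU K a b t B (d : demand K (K*(a+b))) (W : library (K*(a+b)) B) :
  bits (K*(B-t)) :=
  [ffun z : 'I_(K*(B-t)) =>
     match (insub (z %/ (B-t)) : option 'I_K), (insub (t + z %% (B-t)) : option 'I_B) with
     | Some k, Some y => W (d k) y
     | _, _ => false end].

Definition muU K a b t B (d : demand K (K*(a+b))) (k : 'I_K)
  (Z : bits ((2*a+b)*t)) (X : bits (K*(B-t))) : file B :=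
  [ffun y : 'I_B => if y < t then
     (match (insub (pinv K a b k (d k) * t + y) : option 'I_((2*a+b)*t)) with
      | Some x => Z x | None => false end)
   else
     (match (insub (k*(B-t) + (y - t)) : option 'I_(K*(B-t))) with
      | Some z => X z | None => false end)].

Lemma uncoded_scheme K a b t B : 2 <= K -> t <= B ->
  scheme_exists true K a b B ((2*a+b)*t) (K*(B-t)).
Proof.
move=> K2 htB.
exists (@phiU K a b t B htB), (@psiU K a b t B), (@muU K a b t B); split.
  by move=> _; exists (@posf K a b t B htB) => k; split; [exact: (@posf_inj K a b t B htB K2) | move=> W i; rewrite ffunE].
move=> d dv W k; apply/ffunP => y; rewrite ffunE.
have [pq fE] := @pinv_ok K a b k (d k) K2 (dv k).
move: pq fE; set p := pinv K a b k (d k) => pq fE.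
case: ifP => yt.
  have lt : p * t + y < (2*a+b)*t.
    have: p.+1 * t <= (2*a+b) * t by rewrite leq_mul2r pq orbT.
    rewrite mulSn; lia.
  case: insubP => [x _ xv|]; last by rewrite lt.
  rewrite ffunE; congr (W _ _); apply: val_inj => /=; rewrite xv.
    by rewrite divnMDl ?divn_small // ?addn0 ?fE //; lia.
  by rewrite modnMDl modn_small.
have lt : k*(B-t) + (y-t) < K*(B-t).
  apply: lt_mul_blk => //; have := ltn_ord y; lia.
case: insubP => [z _ zv|]; last by rewrite lt.
have Bt : 0 < B - t by have := ltn_ord y; lia.
rewrite ffunE zv divnMDl // modnMDl (divn_small (_ : y - t < B - t)); last first.
  by have := ltn_ord y; lia.
rewrite addn0 modn_small; last by have := ltn_ord y; lia.
case: insubP => [k' _ kv|]; last by rewrite ltn_ord.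
case: insubP => [y' _ yv|]; last by have := ltn_ord y; rewrite (_ : t + (y - t) = y) ?ltn_ord //; lia.
congr (W (d _) _); apply: val_inj; rewrite ?kv ?yv //=; lia.
Qed.


Lemma user_lt K (i : 'I_(K %/ 2)) : 2 * i < K.
Proof. have := ltn_ord i; lia. Qed.

Lemma fid_lt K a b (p : 'I_(K %/ 2) * 'I_(2*a+b)) : 2 * p.1 * (a+b) + p.2 < K*(a+b).
Proof.
have := ltn_ord p.1; have := ltn_ord p.2 => h2 h1.
have: (2 * p.1).+2 * (a+b) <= K * (a+b) by rewrite leq_mul2r; apply/orP; right; lia.
rewrite !mulSn; lia.
Qed.

Definition fid K a b (p : 'I_(K %/ 2) * 'I_(2*a+b)) : 'I_(K*(a+b)) :=
  Ordinal (@fid_lt K a b p).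

Lemma fid_inj K a b : injective (@fid K a b).
Proof.
move=> [i j] [i' j'] [] /= E.
have h1 := ltn_ord j; have h2 := ltn_ord j'.
have E' : i * (2*(a+b)) + j = i' * (2*(a+b)) + j'.
  lia.
have h1' : j < 2*(a+b) by lia.
have h2' : j' < 2*(a+b) by lia.
have [e1 e2] := block_inj h1' h2' E'.
by congr pair; apply: val_inj.
Qed.

Lemma demL_lt K a b (j : 'I_(2*a+b)) (k : 'I_K) :
  k*(a+b) + (if (k %% 2 == 0) && (k < 2*(K%/2)) then (j:nat) else 0) < K*(a+b).
Proof.
have hj := ltn_ord j; have hk := ltn_ord k.
case: ifP => [/andP [h1 h2] | _].
  have: (k:nat).+2 * (a+b) <= K * (a+b) by rewrite leq_mul2r; apply/orP; right; lia.
  rewrite !mulSn; lia.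
rewrite addn0 ltn_mul2r; apply/andP; split; lia.
Qed.

Definition demL K a b (j : 'I_(2*a+b)) : demand K (K*(a+b)) :=
  [ffun k => Ordinal (@demL_lt K a b j k)].

Lemma demL_valid K a b j : 2 <= K -> 1 <= a -> @valid_demand K a b (@demL K a b j).
Proof.
move=> K2 a1 k; rewrite ffunE /= /inD /inD1 /inD2 /cycK /=.
have hj := ltn_ord j; have hk := ltn_ord k.
case: ifP => [/andP [h1 h2] | _].
  have h3 : k.+1 < K by lia.
  rewrite (modn_small h3).
  case: (ltnP j a) => ja.
    by apply/orP; left; apply/andP; split; lia.
  case: (ltnP j (a+b)) => jab.
    by apply/orP; right; apply/orP; left; apply/andP; split; lia.
  by apply/orP; right; apply/orP; right; apply/andP; split; lia.
by apply/orP; left; apply/andP; split; lia.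
Qed.

Lemma card_bits n : #|{: bits n}| = 2 ^ n.
Proof. by rewrite card_ffun card_bool card_ord. Qed.

Lemma lower_count unc K a b B c r : 2 <= K -> 1 <= a ->
  scheme_exists unc K a b B c r ->
  B * (K %/ 2 * (2*a+b)) <= c * (K %/ 2) + r * (2*a+b).
Proof.
move=> K2 a1 [phi [psi [mu [_ dec]]]].
pose user (i : 'I_(K %/ 2)) : 'I_K := Ordinal (@user_lt K i).
pose ext (v : {ffun 'I_(K %/ 2) * 'I_(2*a+b) -> file B}) : library (K*(a+b)) B :=
  [ffun f => if [pick p | @fid K a b p == f] is Some p then v p else [ffun => false]].
have extE v p : ext v (@fid K a b p) = v p.
  rewrite ffunE; case: pickP => [p' /eqP H | H]; first by rewrite (@fid_inj K a b _ _ H).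
  by have := H p; rewrite eqxx.
pose h (v : {ffun 'I_(K %/ 2) * 'I_(2*a+b) -> file B}) :
  ({ffun 'I_(K %/ 2) -> bits c} * {ffun 'I_(2*a+b) -> bits r})%type :=
  ([ffun i => phi (user i) (ext v)], [ffun j => psi (@demL K a b j) (ext v)]).
have hinj : injective h.
  move=> v v' [] E1 E2; apply/ffunP => [[i j]].
  have dE : @demL K a b j (user i) = @fid K a b (i, j).
    apply: val_inj; rewrite ffunE /= ifT //; apply/andP; split.
      by rewrite modnMr.
    have := ltn_ord i; lia.
  rewrite -!extE -dE -(dec _ (@demL_valid K a b j K2 a1) (ext v)) -(dec _ (@demL_valid K a b j K2 a1) (ext v')).
  move/ffunP/(_ i): E1; move/ffunP/(_ j): E2; rewrite !ffunE => -> ->.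
  by [].
have := leq_card h hinj.
rewrite card_prod !card_ffun !card_prod !card_ord.
by rewrite card_bool -!expnM -expnD leq_exp2l.
Qed.

Local Open Scope ring_scope.

Lemma scheme_weaken unc K a b B c r :
  scheme_exists true K a b B c r -> scheme_exists unc K a b B c r.
Proof.
move=> [phi [psi [mu [u d]]]]; exists phi, psi, mu; split => // _; exact: u.
Qed.

Lemma loads_ge0 (R : realType) unc K a b (M : R) x : loads unc K a b M x -> 0 <= x.
Proof. by move=> [B [c [r [_ [_ [-> _]]]]]]; rewrite divr_ge0. Qed.

Lemma loads_n0 (R : realType) unc K a b (M : R) : (2 <= K)%N -> 0 <= M ->
  (loads unc K a b M !=set0)%classic.
Proof.
move=> K2 M0; exists ((K * (1 - 0))%N%:R / 1%:R).
exists 1%N, ((2*a+b)*0)%N, (K*(1-0))%N; split => //; split.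
  by rewrite muln0 mulr1.
split => //; apply: scheme_weaken; exact: uncoded_scheme.
Qed.

Lemma Ropt_lower (R : realType) K a b (M : R) : (2 <= K)%N -> (1 <= a)%N -> 0 <= M ->
  (K %/ 2)%:R * Num.max 0 (1 - M / (2*a+b)%:R) <= Ropt K a b M.
Proof.
move=> K2 a1 M0; apply: lb_le_inf; first exact: loads_n0.
move=> x [B [c [r [B0 [cM [-> sch]]]]]].
have := @lower_count _ K a b B c r K2 a1 sch.
set u := (K %/ 2)%N; set q := (2*a+b)%N => H.
have q0 : (0 < q)%N by rewrite /q; lia.
have HR : (u%:R * q%:R * B%:R <= u%:R * c%:R + r%:R * q%:R :> R).
  by rewrite -!natrM -natrD ler_nat; move: H; lia.
have uge : (0 <= u%:R :> R) by [].
rewrite /Num.max; case: ifP => _; last by rewrite mulr0 divr_ge0.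
have B0' : (0 < B%:R :> R) by rewrite ltr0n.
have q0' : (0 < q%:R :> R) by rewrite ltr0n.
have : (u%:R * c%:R <= u%:R * (M * B%:R) :> R) by rewrite ler_wpM2l.
move=> H2.
rewrite -subr_ge0.
have -> : r%:R / B%:R - u%:R * (1 - M / q%:R) =
  (r%:R * q%:R - u%:R * q%:R * B%:R + u%:R * M * B%:R) / (q%:R * B%:R) :> R.
  by field; apply/andP; split; rewrite gt_eqF.
apply: divr_ge0; last by rewrite mulr_ge0 // ltW.
lra.
Qed.


Lemma Ropt_u_upper (R : realType) K a b (M : R) : (2 <= K)%N -> (1 <= a)%N -> 0 <= M ->
  Ropt_u K a b M <= K%:R * Num.max 0 (1 - M / (2*a+b)%:R).
Proof.
move=> K2 a1 M0.
have hlb : has_lbound (loads true K a b M).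
  by exists 0 => x; apply: loads_ge0.
set q := (2*a+b)%N.
have q0' : (0 < q%:R :> R) by rewrite ltr0n /q; lia.
have K0 : (0 < K%:R :> R) by rewrite ltr0n; lia.
apply/ler_addgt0Pr => e e0.
set n := Num.truncn (K%:R / e).
have hn : K%:R / e < n.+1%:R by apply: truncnS_gt.
set B := n.+1.
have B0 : (0 < B%:R :> R) by rewrite ltr0n.
have KB : K%:R / B%:R < e.
  by rewrite ltr_pdivrMr // mulrC -ltr_pdivrMr.
case: (lerP q%:R M) => hM.
  have L0 : loads true K a b M 0.
    exists B, (q * B)%N, (K * (B - B))%N; split => //; split.
      by rewrite natrM ler_wpM2r // ltW.
    split; first by rewrite subnn muln0 mul0r.
    by apply: uncoded_scheme.
  apply: le_trans (ge_inf hlb L0) _.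
  rewrite ler_wpDl ?(ltW e0) // mulr_ge0 ?(ltW K0) //.
  by rewrite le_max lexx.
set t := Num.truncn (M * B%:R / q%:R).
have hp : 0 <= M * B%:R / q%:R by rewrite divr_ge0 // ?mulr_ge0 // ltW.
have /andP [ht1 ht2] := truncn_itv hp.
rewrite -/t in ht1 ht2.
have tB : (t <= B)%N.
  rewrite -(ler_nat R); apply: (le_trans ht1).
  rewrite ler_pdivrMr // mulrC; apply: ler_wpM2l; [exact: ltW | exact: ltW].
have L1 : loads true K a b M ((K * (B - t))%N%:R / B%:R).
  exists B, (q * t)%N, (K * (B - t))%N; split => //; split.
    by rewrite natrM mulrC -ler_pdivlMr.
  by split => //; apply: uncoded_scheme.
apply: le_trans (ge_inf hlb L1) _.
have -> : Num.max 0 (1 - M / q%:R) = 1 - M / q%:R.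
  rewrite /Num.max ifT //. rewrite subr_gt0 ltr_pdivrMr // mul1r //.
rewrite natrM natrB //.
have : (M * B%:R / q%:R - 1 < t%:R) by lra.
move=> ht3.
have E1 : K%:R * (B%:R - t%:R) / B%:R = K%:R - K%:R * t%:R / B%:R :> R.
  by field; rewrite gt_eqF.
rewrite E1.
have E2 : K%:R * (M * B%:R / q%:R - 1) / B%:R = K%:R * (M / q%:R) - K%:R / B%:R :> R.
  by field; apply/andP; split; rewrite gt_eqF.
have : K%:R * (M * B%:R / q%:R - 1) / B%:R <= K%:R * t%:R / B%:R :> R.
  by rewrite ler_pdivrMr // divfK ?gt_eqF // ler_wpM2l ?ltW.
rewrite E2; lra.
Qed.


Theorem theorem2 (R : realType) (K a b : nat) (M : R) :
  (2 <= K)%N -> (1 <= a)%N -> (1 <= b)%N -> 0 <= M ->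
  (~~ odd K -> Ropt_u K a b M <= 2 * Ropt K a b M) /\
  (odd K -> Ropt_u K a b M <= 3 * Ropt K a b M).
Proof.
move=> K2 a1 b1 M0.
have Up := @Ropt_u_upper R K a b M K2 a1 M0.
have Lo := @Ropt_lower R K a b M K2 a1 M0.
set m := Num.max 0 (1 - M / (2*a+b)%:R) in Up Lo.
have m0 : 0 <= m by rewrite /m le_max lexx.
have hK := modn2 K.
split=> hodd.
  have E : K = (2 * (K %/ 2))%N by move: hK; rewrite (negbTE hodd); lia.
  by apply: (le_trans Up); rewrite {1}E natrM -mulrA ler_wpM2l.
have E : (K <= 3 * (K %/ 2))%N by move: hK; rewrite hodd; lia.
apply: (le_trans Up); apply: le_trans (_ : (3 * (K %/ 2))%N%:R * m <= _).
  by rewrite ler_wpM2r // ler_nat.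
by rewrite natrM -mulrA ler_wpM2l.
Qed.
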